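(* Let $K$ be a field, $0<n<\omega$, and $(R_i\mid i<n)$ a sequence of $K$-algebras such that $R_0$ possesses a strong multiplicative basis $B_0$ containing a non-zero idempotent $e$, and each $R_i$ ($0<i<n$) has a multiplicative basis. Then the $K$-algebra $R=\prod_{i<n}R_i$ has a strong multiplicative basis.
   Context: A $K$-linear basis $B$ of a $K$-algebra is multiplicative if for all $b,b'\in B$ either $bb'=0$ or $bb'\in B$, and strong multiplicative if $bb'\in B$ for all $b,b'\in B$. *)

(* Defs.v *)
From HB Require Import structures.
From mathcomp Require Import all_boot all_order all_algebra.
Set Implicit Arguments. Unset Strict Implicit. Unset Printing Implicit Defensive.
Import Order.TTheory GRing.Theory Num.Theory.
Local Open Scope ring_scope.

Record kalg (K : fieldType) := KAlg {
  kcar :> lmodType K;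
  kmul : kcar -> kcar -> kcar;
  kmulA : forall x y z, kmul x (kmul y z) = kmul (kmul x y) z;
  kmulDl : forall x y z, kmul (x + y) z = kmul x z + kmul y z;
  kmulDr : forall x y z, kmul x (y + z) = kmul x y + kmul x z;
  kmulZl : forall (a : K) x y, kmul (a *: x) y = a *: kmul x y;
  kmulZr : forall (a : K) x y, kmul x (a *: y) = a *: kmul x y
}.
Arguments kmul {K} _ _ _.

Definition lin_indep (K : fieldType) (V : lmodType K) (B : V -> Prop) :=
  forall (s : seq V) (c : V -> K), uniq s -> (forall v, v \in s -> B v) ->
    \sum_(v <- s) c v *: v = 0 -> forall v, v \in s -> c v = 0.

Definition spanning (K : fieldType) (V : lmodType K) (B : V -> Prop) :=
  forall x : V, exists (s : seq V) (c : V -> K),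
    (forall v, v \in s -> B v) /\ x = \sum_(v <- s) c v *: v.

Definition is_basis (K : fieldType) (V : lmodType K) (B : V -> Prop) :=
  lin_indep B /\ spanning B.

Definition mult_basis (K : fieldType) (A : kalg K) (B : A -> Prop) :=
  is_basis B /\ forall b b', B b -> B b' -> kmul A b b' = 0 \/ B (kmul A b b').

Definition strong_mult_basis (K : fieldType) (A : kalg K) (B : A -> Prop) :=
  is_basis B /\ forall b b', B b -> B b' -> B (kmul A b b').

Section Product.
Variables (K : fieldType) (n : nat) (R : 'I_n -> kalg K).

Definition prodT := {dffun forall i : 'I_n, (R i : lmodType K)}.
HB.instance Definition _ := Choice.on prodT.

Definition pzero : prodT := [ffun i => 0].
Definition padd (x y : prodT) : prodT := [ffun i => x i + y i].
Definition popp (x : prodT) : prodT := [ffun i => - x i].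
Definition pscale (a : K) (x : prodT) : prodT := [ffun i => a *: x i].
Definition pmul (x y : prodT) : prodT := [ffun i => kmul (R i) (x i) (y i)].

Lemma paddA : associative padd.
Proof. by move=> x y z; apply/ffunP=> i; rewrite !ffunE addrA. Qed.
Lemma paddC : commutative padd.
Proof. by move=> x y; apply/ffunP=> i; rewrite !ffunE addrC. Qed.
Lemma padd0 : left_id pzero padd.
Proof. by move=> x; apply/ffunP=> i; rewrite !ffunE add0r. Qed.
Lemma paddN : left_inverse pzero popp padd.
Proof. by move=> x; apply/ffunP=> i; rewrite !ffunE addNr. Qed.

HB.instance Definition _ := GRing.isZmodule.Build prodT paddA paddC padd0 paddN.

Lemma pscaleA a b (x : prodT) : pscale a (pscale b x) = pscale (a * b) x.
Proof. by apply/ffunP=> i; rewrite !ffunE scalerA. Qed.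
Lemma pscale1 : left_id 1 pscale.
Proof. by move=> x; apply/ffunP=> i; rewrite !ffunE scale1r. Qed.
Lemma pscaleDr : right_distributive pscale padd.
Proof. by move=> a x y; apply/ffunP=> i; rewrite !ffunE scalerDr. Qed.
Lemma pscaleDl (x : prodT) : {morph pscale^~ x : a b / a + b >-> padd a b}.
Proof. by move=> a b; apply/ffunP=> i; rewrite !ffunE scalerDl. Qed.

HB.instance Definition _ :=
  GRing.Zmodule_isLmodule.Build K prodT pscaleA pscale1 pscaleDr pscaleDl.

Lemma pmulA x y z : pmul x (pmul y z) = pmul (pmul x y) z.
Proof. by apply/ffunP=> i; rewrite !ffunE kmulA. Qed.
Lemma pmulDl (x y z : prodT) : pmul (x + y) z = pmul x z + pmul y z.
Proof. by apply/ffunP=> i; rewrite /pmul [x + y]/(padd x y) [_ + _]/(padd _ _) !ffunE kmulDl. Qed.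
Lemma pmulDr (x y z : prodT) : pmul x (y + z) = pmul x y + pmul x z.
Proof. by apply/ffunP=> i; rewrite /pmul [y + z]/(padd y z) [_ + _]/(padd _ _) !ffunE kmulDr. Qed.
Lemma pmulZl (a : K) (x y : prodT) : pmul (a *: x) y = a *: pmul x y.
Proof. by apply/ffunP=> i; rewrite /pmul [a *: x]/(pscale a x) [a *: _]/(pscale a _) !ffunE kmulZl. Qed.
Lemma pmulZr (a : K) (x y : prodT) : pmul x (a *: y) = a *: pmul x y.
Proof. by apply/ffunP=> i; rewrite /pmul [a *: y]/(pscale a y) [a *: _]/(pscale a _) !ffunE kmulZr. Qed.

Definition prod_kalg : kalg K :=
  @KAlg K prodT pmul pmulA pmulDl pmulDr pmulZl pmulZr.

End Product.

(* Main.v *)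
Require Import Defs.
From HB Require Import structures.
From mathcomp Require Import all_boot all_order all_algebra.
From Stdlib Require Import IndefiniteDescription.
Import GRing.Theory.
Set Implicit Arguments. Unset Strict Implicit. Unset Printing Implicit Defensive.
Local Open Scope ring_scope.

Definition single K n (R : 'I_n -> kalg K) (i : 'I_n) (b : R i) : prodT R :=
  [ffun j : 'I_n => match i =P j return (R j : Type) with
                    | ReflectT h => ecast k (R k : Type) h b | ReflectF _ => 0 end].
Arguments single {K n R i} b.

Lemma single_at K n (R : 'I_n -> kalg K) i (b : R i) : single b i = b.
Proof. rewrite /single ffunE; case: eqP => // h. by rewrite (eq_axiomK h). Qed.
Lemma single_out K n (R : 'I_n -> kalg K) i (b : R i) j : i != j -> single b j = 0.
Proof. rewrite /single ffunE; by case: eqP. Qed.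
Lemma addE K n (R : 'I_n -> kalg K) (x y : prodT R) j : (x + y) j = x j + y j.
Proof. by rewrite /= ffunE. Qed.
Lemma scaleE K n (R : 'I_n -> kalg K) a (x : prodT R) j : (a *: x) j = a *: x j.
Proof. by rewrite /= ffunE. Qed.
Lemma zeroE K n (R : 'I_n -> kalg K) j : (0 : prodT R) j = 0.
Proof. by rewrite /= ffunE. Qed.
Lemma mulE K n (R : 'I_n -> kalg K) (x y : prodT R) j :
  kmul (prod_kalg R) x y j = kmul (R j) (x j) (y j).
Proof. by rewrite /= ffunE. Qed.
Lemma sumE K n (R : 'I_n -> kalg K) (I : Type) (r : seq I) (P : pred I)
  (F : I -> prodT R) j :
  (\sum_(k <- r | P k) F k) j = \sum_(k <- r | P k) F k j.
Proof. apply: (big_morph (fun x : prodT R => x j)); [by move=> x y; rewrite addE | by rewrite zeroE]. Qed.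

Lemma kmul0l K (A : kalg K) (x : A) : kmul A 0 x = 0.
Proof. by have h := @kmulZl _ A 0 0 x; rewrite !scale0r in h. Qed.
Lemma kmul0r K (A : kalg K) (x : A) : kmul A x 0 = 0.
Proof. by have h := @kmulZr _ A 0 x 0; rewrite !scale0r in h. Qed.

Lemma singleD K n (R : 'I_n -> kalg K) i (u v : R i) :
  single (u + v) = single u + single v.
Proof.
apply/ffunP => j; rewrite addE; case: (eqVneq i j) => [<-|nj].
  by rewrite !single_at.
by rewrite !single_out // addr0.
Qed.
Lemma singleZ K n (R : 'I_n -> kalg K) i a (u : R i) :
  single (a *: u) = a *: single u.
Proof.
apply/ffunP => j; rewrite scaleE; case: (eqVneq i j) => [<-|nj].
  by rewrite !single_at.
by rewrite !single_out // scaler0.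
Qed.
Lemma single0 K n (R : 'I_n -> kalg K) i : single (0 : R i) = 0.
Proof. by rewrite -(scale0r (0 : R i)) singleZ scale0r. Qed.
Lemma single_sum K n (R : 'I_n -> kalg K) i (I : Type) (r : seq I) (F : I -> R i) :
  single (\sum_(k <- r) F k) = \sum_(k <- r) single (F k).
Proof. apply: (big_morph single); [exact: singleD | exact: single0]. Qed.

Lemma basis_neq0 (K : fieldType) (V : lmodType K) (B : V -> Prop) w : lin_indep B -> B w -> w != 0.
Proof.
move=> LI Bw; apply/eqP => w0.
have h1 : forall v, v \in [:: w] -> B v.
  by move=> v; rewrite mem_seq1 => /eqP ->.
have h2 : \sum_(v <- [:: w]) (fun _ => 1 : K) v *: v = 0 by rewrite big_seq1 scale1r.
have := LI [:: w] (fun _ => 1) isT h1 h2 w (mem_head _ _).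
by move=> /eqP; rewrite oner_eq0.
Qed.

Lemma span_pairs (K : fieldType) (V : lmodType K) (P : V -> Prop) (s : seq (K * V)) (x : V) :
  (forall p, p \in s -> P p.2) -> x = \sum_(p <- s) p.1 *: p.2 ->
  exists s' c, uniq s' /\ (forall v, v \in s' -> P v) /\ x = \sum_(v <- s') c v *: v.
Proof.
elim: s x => [|[a v] s IH] x HP ->.
  by exists [::], (fun _ => 0); rewrite !big_nil.
rewrite big_cons /=.
have HP' : forall p, p \in s -> P p.2.
  by move=> p hp; apply: HP; rewrite in_cons hp orbT.
have [s' [c [u [hP e]]]] := IH _ HP' erefl.
have Pv : P v by apply: (HP (a, v)); rewrite mem_head.
case: (boolP (v \in s')) => hv.
  exists s', (fun w => if w == v then c v + a else c w); split => //; split => //.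
  rewrite e (bigD1_seq v) // [in RHS](bigD1_seq v) //= eqxx.
  rewrite [in RHS](eq_bigr (fun w => c w *: w)); last by move=> w /negbTE ->.
  by rewrite scalerDl addrA (addrC (a *: v)).
exists (v :: s'), (fun w => if w == v then a else c w); split; first by rewrite /= hv u.
split; first by move=> w; rewrite in_cons => /orP [/eqP ->|] //; apply: hP.
rewrite big_cons eqxx e; congr (_ + _); apply: eq_big_seq => w hw.
by case: eqVneq hw => // ->; rewrite (negbTE hv).
Qed.

Definition spanP (K : fieldType) (V : lmodType K) (P : V -> Prop) (x : V) :=
  exists s : seq (K * V), (forall p, p \in s -> P p.2) /\ x = \sum_(p <- s) p.1 *: p.2.

Lemma spanP0 (K : fieldType) (V : lmodType K) (P : V -> Prop) : spanP P 0.
Proof. by exists [::]; rewrite big_nil. Qed.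
Lemma spanPD (K : fieldType) (V : lmodType K) (P : V -> Prop) x y :
  spanP P x -> spanP P y -> spanP P (x + y).
Proof.
move=> [s1 [h1 ->]] [s2 [h2 ->]]; exists (s1 ++ s2); rewrite big_cat; split => //.
by move=> p; rewrite mem_cat => /orP [/h1|/h2].
Qed.
Lemma spanPZ (K : fieldType) (V : lmodType K) (P : V -> Prop) a x : spanP P x -> spanP P (a *: x).
Proof.
move=> [s [h ->]]; exists [seq (a * p.1, p.2) | p <- s]; split.
  by move=> p /mapP [q qs ->]; apply: (h q).
by rewrite big_map scaler_sumr; apply: eq_bigr => p _; rewrite scalerA.
Qed.
Lemma spanP1 (K : fieldType) (V : lmodType K) (P : V -> Prop) v : P v -> spanP P v.
Proof. by move=> Pv; exists [:: (1, v)]; rewrite big_seq1 scale1r; split => // p; rewrite mem_seq1 => /eqP ->. Qed.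
Lemma spanP_sum (K : fieldType) (V : lmodType K) (P : V -> Prop) (I : Type) (r : seq I) (F : I -> V) :
  (forall i, spanP P (F i)) -> spanP P (\sum_(i <- r) F i).
Proof.
move=> h; apply: (big_ind (spanP P)); [exact: spanP0 | exact: spanPD | by move=> i _].
Qed.

Lemma spanP_sum_seq (K : fieldType) (V : lmodType K) (P : V -> Prop) (I : eqType) (r : seq I) (F : I -> V) :
  (forall i, i \in r -> spanP P (F i)) -> spanP P (\sum_(i <- r) F i).
Proof.
move=> h; rewrite big_seq.
by apply: (big_ind (spanP P)); [exact: spanP0 | exact: spanPD | move=> i /h].
Qed.

Theorem lemma5p5 (K : fieldType) (n : nat) (hn : (0 < n)%N)
    (R : 'I_n -> kalg K) :
  (exists (B0 : R (Ordinal hn) -> Prop) (e : R (Ordinal hn)),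
      strong_mult_basis B0 /\ B0 e /\ e != 0 /\ kmul (R (Ordinal hn)) e e = e) ->
  (forall i : 'I_n, i != Ordinal hn -> exists B : R i -> Prop, mult_basis B) ->
  exists B : prod_kalg R -> Prop, strong_mult_basis B.
Proof.
move=> [B0 [e [[[LI0 SP0] M0] [B0e [e0 ee]]]]] HB.
set i0 := Ordinal hn in B0 e LI0 SP0 M0 B0e e0 ee HB *.
have HB' : forall i : 'I_n, exists B : R i -> Prop, i != i0 -> mult_basis B.
  move=> i; case: (boolP (i == i0)) => h; first by exists (fun _ => False).
  by have [B hB] := HB i h; exists B.
pose Bf i := proj1_sig (constructive_indefinite_description _ (HB' i)).
have HBf : forall i, i != i0 -> mult_basis (Bf i) :=
  fun i => proj2_sig (constructive_indefinite_description _ (HB' i)).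
pose B (x : prodT R) := (exists b, B0 b /\ x = single b) \/
  (exists i (c : R i), i != i0 /\ Bf i c /\ x = single e + single c).
exists B.
have MU : forall b b', B b -> B b' -> B (kmul (prod_kalg R) b b').
  move=> x y [[b [Bb ->]]|[i [c [ni [Bc ->]]]]] [[b' [Bb' ->]]|[i' [c' [ni' [Bc' ->]]]]].
  - left; exists (kmul _ b b'); split; first exact: M0.
    apply/ffunP => j; rewrite mulE; case: (eqVneq i0 j) => [<-|nj].
      by rewrite !single_at.
    by rewrite !(single_out _ nj) kmul0l.
  - left; exists (kmul _ b e); split; first exact: M0.
    apply/ffunP => j; rewrite mulE addE; case: (eqVneq i0 j) => [<-|nj].
      by rewrite !single_at !(single_out _ ni') !addr0.
    by rewrite !(single_out _ nj) kmul0l.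
  - left; exists (kmul _ e b'); split; first exact: M0.
    apply/ffunP => j; rewrite mulE addE; case: (eqVneq i0 j) => [<-|nj].
      by rewrite !single_at !(single_out _ ni) !addr0.
    by rewrite !(single_out _ nj) kmul0r.
  - have ni0 : i0 != i by rewrite eq_sym.
    have ni0' : i0 != i' by rewrite eq_sym.
    case: (eqVneq i i') => [eii'|nii'].
      subst i'.
      case: ((HBf i ni).2 c c' Bc Bc') => [cc0|Bcc].
        left; exists e; split => //.
        apply/ffunP => j; rewrite mulE !addE; case: (eqVneq i0 j) => [<-|nj].
          by rewrite !single_at !(single_out _ ni) !addr0 ee.
        case: (eqVneq i j) => [<-|nij].
          by rewrite !single_at !(single_out _ ni0) !add0r cc0.
        by rewrite !single_out // !addr0 kmul0l.
      right; exists i, (kmul _ c c'); split => //; split => //.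
      apply/ffunP => j; rewrite mulE !addE; case: (eqVneq i0 j) => [<-|nj].
        by rewrite !single_at !(single_out _ ni) !addr0 ee.
      case: (eqVneq i j) => [<-|nij].
        by rewrite !single_at !(single_out _ ni0) !add0r.
      by rewrite !single_out // !addr0 kmul0l.
    left; exists e; split => //.
    apply/ffunP => j; rewrite mulE !addE; case: (eqVneq i0 j) => [<-|nj].
      by rewrite !single_at !(single_out _ ni) !(single_out _ ni') !addr0 ee.
    case: (eqVneq i j) => [<-|nij].
      have ni2 : i' != i by rewrite eq_sym.
      by rewrite !(single_out _ ni0) !(single_out _ ni2) !add0r kmul0r.
    by rewrite !(single_out _ nj) !(single_out _ nij) !add0r kmul0l.
have SP : @spanning K (prodT R) B.
  have Ssingle : forall i (y : R i), spanP B (single y).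
    move=> i y; case: (eqVneq i i0) => [eq|ni].
      subst i.
      have [s [c [hs ->]]] := SP0 y.
      rewrite single_sum; apply: spanP_sum_seq => v vs.
      rewrite singleZ; apply: spanPZ; apply: spanP1; left; exists v; split => //.
      exact: hs.
    have [s [c [hs ->]]] := (HBf i ni).1.2 y.
    rewrite single_sum; apply: spanP_sum_seq => v vs.
    rewrite singleZ; apply: spanPZ.
    rewrite (_ : single v = (single e + single v) + (-1) *: single e); last first.
      by rewrite scaleN1r addrAC subrr add0r.
    apply: spanPD; first by apply: spanP1; right; exists i, v; split => //; split => //; exact: hs.
    by apply: spanPZ; apply: spanP1; left; exists e.
  move=> x.
  have : spanP B x.
    have -> : x = \sum_(i < n) single (x i).
      apply/ffunP => j; rewrite sumE (bigD1 j) //= single_at big1 ?addr0 // => i nij.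
      by rewrite single_out.
    exact: spanP_sum.
  move=> [s [hs xe]]; have [s' [c [_ [h1 h2]]]] := span_pairs hs xe.
  by exists s', c.
have LI : @lin_indep K (prodT R) B.
  move=> s c us Bs sum0.
  have sumj : forall j, \sum_(v <- s) c v *: v j = 0.
    move=> j; have := congr1 (fun x : prodT R => x j) sum0.
    rewrite /= sumE zeroE => h; rewrite -[in RHS]h; apply: eq_bigr => v _; by rewrite scaleE.
  have Hj : forall j, j != i0 -> forall v, v \in s -> v j != 0 -> c v = 0.
    move=> j nj.
    have nj' : i0 != j by rewrite eq_sym.
    have [[LIj _] _] := HBf j nj.
    have Bv : forall v, v \in s -> v j != 0 -> Bf j (v j) /\ v = single e + single (v j).
      move=> v vs vj; case: (Bs v vs) => [[b [_ ev]]|[i [ci [ni [Bci ev]]]]].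
        by move: vj; rewrite ev single_out ?eqxx.
      have eij : i = j.
        apply/eqP; apply: contraNT vj => ne.
        by rewrite ev addE !single_out ?addr0.
      subst i; rewrite ev addE single_at (single_out _ nj') add0r; split => //.
    pose sj := [seq v j | v : prodT R <- s & v j != 0].
    pose cj := fun w : R j => c (single e + single w).
    have H := LIj sj cj.
    have H1 : uniq sj.
      rewrite map_inj_in_uniq ?filter_uniq // => v w.
      rewrite !mem_filter => /andP [vj vs] /andP [wj ws] ev.
      by rewrite (Bv v vs vj).2 (Bv w ws wj).2 ev.
    have H2 : forall w, w \in sj -> Bf j w.
      by move=> w /mapP [v]; rewrite mem_filter => /andP [vj vs] ->; exact: (Bv v vs vj).1.
    have H3 : \sum_(w <- sj) cj w *: w = 0.
      rewrite big_map big_filter -[in RHS](sumj j) [in RHS](bigID (fun v : prodT R => v j != 0)) /=.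
      rewrite [X in _ = _ + X]big1 ?addr0; last by move=> v /negbNE /eqP ->; rewrite scaler0.
      rewrite big_seq_cond [in RHS]big_seq_cond; apply: eq_bigr => v /andP [vs vj].
      by rewrite /cj -(Bv v vs vj).2.
    move=> v vs vj; have := H H1 H2 H3 (v j).
    rewrite /cj -(Bv v vs vj).2; apply; apply/mapP; exists v => //.
    by rewrite mem_filter vj vs.
  pose pA := fun v : prodT R => [forall j, (j != i0) ==> (v j == 0)].
  have BvA : forall v, v \in s -> pA v -> B0 (v i0) /\ v = single (v i0).
    move=> v vs pv; case: (Bs v vs) => [[b [Bb ev]]|[i [ci [ni [Bci ev]]]]].
      by rewrite ev single_at.
    have := forallP pv i; rewrite ni /= ev addE single_at.
    have ni0 : i0 != i by rewrite eq_sym.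
    rewrite (single_out _ ni0) add0r => ci0.
    by move: (basis_neq0 (HBf i ni).1.1 Bci); rewrite ci0.
  have Hnot : forall v, v \in s -> ~~ pA v -> c v = 0.
    move=> v vs /forallPn [j]; rewrite negb_imply => /andP [nj vj].
    exact: (Hj j nj v vs vj).
  pose s0 := [seq v i0 | v : prodT R <- s & pA v].
  pose c0 := fun w : R i0 => c (single w).
  have H := LI0 s0 c0.
  have H1 : uniq s0.
    rewrite map_inj_in_uniq ?filter_uniq // => v w.
    rewrite !mem_filter => /andP [vj vs] /andP [wj ws] ev.
    by rewrite (BvA v vs vj).2 (BvA w ws wj).2 ev.
  have H2 : forall w, w \in s0 -> B0 w.
    by move=> w /mapP [v]; rewrite mem_filter => /andP [vj vs] ->; exact: (BvA v vs vj).1.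
  have H3 : \sum_(w <- s0) c0 w *: w = 0.
    rewrite big_map big_filter -[in RHS](sumj i0) [in RHS](bigID pA) /=.
    rewrite [X in _ = _ + X]big_seq_cond [X in _ = _ + X]big1 ?addr0; last first.
      by move=> v /andP [vs nv]; rewrite Hnot // scale0r.
    rewrite big_seq_cond [in RHS]big_seq_cond; apply: eq_bigr => v /andP [vs vj].
    by rewrite /c0 -(BvA v vs vj).2.
  move=> v vs; case: (boolP (pA v)) => [pv|npv]; last exact: Hnot.
  have := H H1 H2 H3 (v i0).
  rewrite /c0 -(BvA v vs pv).2; apply; apply/mapP; exists v => //.
  by rewrite mem_filter pv vs.
by split; [split|].
Qed.
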